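(* Let $\mathcal S$ be a set of density matrices on finite-dimensional Hilbert spaces that is closed under tensor products and under permutations of tensor factors, and let $f$ be a real-valued function on pairs $(\rho,\sigma)$ with $\sigma\in\mathcal S$ and $\rho$ a density matrix on $\mathcal H_\sigma$, which is locally monotonic with respect to $\mathcal S$. Then $f'(\rho,\sigma):=f(\rho,\sigma)-f(\sigma,\sigma)$ is super-additive: for all $\sigma_1,\sigma_2\in\mathcal S$ and every density matrix $\rho_{12}$ on $\mathcal H_{\sigma_1}\otimes\mathcal H_{\sigma_2}$ with marginals $\rho_1,\rho_2$, $$f'(\rho_{12},\sigma_1\otimes\sigma_2)\ge f'(\rho_1,\sigma_1)+f'(\rho_2,\sigma_2).$$
   Context: For $\sigma\in\mathcal S$, $\mathcal H_\sigma$ is the Hilbert space on which $\sigma$ acts and $\mathcal C_\sigma$ is the set of quantum channels $C$ on $\mathcal H_\sigma$ with $C[\sigma]=\sigma$. Closure under permutations means $\sigma\otimes\sigma'\in\mathcal S\Rightarrow\sigma'\otimes\sigma\in\mathcal S$. $f$ is locally monotonic with respect to $\mathcal S$ if for all $\sigma_1,\sigma_2\in\mathcal S$, all $C\in\mathcal C_{\sigma_1\otimes\sigma_2}$ and all density matrices $\rho_i$ on $\mathcal H_{\sigma_i}$: $f(\rho_1,\sigma_1)+f(\rho_2,\sigma_2)\ge f(\rho'_1,\sigma_1)+f(\rho'_2,\sigma_2)$, where $\rho'_1=\mathrm{Tr}_2[C(\rho_1\otimes\rho_2)]$, $\rho'_2=\mathrm{Tr}_1[C(\rho_1\otimes\rho_2)]$.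 *)

(* Defs.v *)
From HB Require Import structures.
From mathcomp Require Import all_boot all_order all_algebra.
From mathcomp Require Import complex mxtens.
Set Implicit Arguments. Unset Strict Implicit. Unset Printing Implicit Defensive.
Import Order.TTheory GRing.Theory Num.Theory.
Local Open Scope ring_scope.

Section Quantum.
Variable R : rcfType.
Local Notation C := (R[i]).

Definition adjmx {m n} (A : 'M[C]_(m, n)) : 'M[C]_(n, m) :=
  \matrix_(i, j) (A j i)^*.

Definition hermitian {n} (A : 'M[C]_n) : Prop := adjmx A = A.

Definition psd {n} (A : 'M[C]_n) : Prop :=
  hermitian A /\ forall v : 'cV[C]_n, 0 <= (adjmx v *m A *m v) 0 0.

Definition density {n} (A : 'M[C]_n) : Prop := psd A /\ \tr A = 1.

(* partial traces on C^m (x) C^n (Kronecker ordering of mxtens) *)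
Definition ptrace2 {m n} (X : 'M[C]_(m * n)) : 'M[C]_m :=
  \matrix_(i, j) \sum_(a < n) X (mxtens_index (i, a)) (mxtens_index (j, a)).
Definition ptrace1 {m n} (X : 'M[C]_(m * n)) : 'M[C]_n :=
  \matrix_(a, b) \sum_(i < m) X (mxtens_index (i, a)) (mxtens_index (i, b)).

(* (id_k (x) Phi) applied to X on C^k (x) C^n, for a linear map Phi *)
Definition ampliate {k n} (Phi : 'M[C]_n -> 'M[C]_n) (X : 'M[C]_(k * n))
  : 'M[C]_(k * n) :=
  \matrix_(p, q)
    Phi (\matrix_(a, b) X (mxtens_index ((mxtens_unindex p).1, a))
                          (mxtens_index ((mxtens_unindex q).1, b)))
        (mxtens_unindex p).2 (mxtens_unindex q).2.

Definition channel {n} (Phi : 'M[C]_n -> 'M[C]_n) : Prop :=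
  [/\ (forall (a : C) (X Y : 'M[C]_n), Phi (a *: X + Y) = a *: Phi X + Phi Y),
      (forall k (X : 'M[C]_(k * n)), psd X -> psd (ampliate Phi X)) &
      (forall X : 'M[C]_n, \tr (Phi X) = \tr X)].

Definition states_set := forall n, 'M[C]_n -> Prop.

Definition closed_tensor (S : states_set) : Prop :=
  forall m n (s1 : 'M[C]_m) (s2 : 'M[C]_n), S m s1 -> S n s2 -> S (m * n)%N (s1 *t s2).

Definition closed_perm (S : states_set) : Prop :=
  forall m n (s1 : 'M[C]_m) (s2 : 'M[C]_n), S (m * n)%N (s1 *t s2) -> S (n * m)%N (s2 *t s1).

(* f (rho, sigma) given by f n rho sigma *)
Definition locally_monotonic (S : states_set) (f : forall n, 'M[C]_n -> 'M[C]_n -> R) : Prop :=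
  forall m n (s1 : 'M[C]_m) (s2 : 'M[C]_n), S m s1 -> S n s2 ->
  forall Phi : 'M[C]_(m * n) -> 'M[C]_(m * n), channel Phi -> Phi (s1 *t s2) = s1 *t s2 ->
  forall (r1 : 'M[C]_m) (r2 : 'M[C]_n), density r1 -> density r2 ->
  f m (ptrace2 (Phi (r1 *t r2))) s1 + f n (ptrace1 (Phi (r1 *t r2))) s2
    <= f m r1 s1 + f n r2 s2.

End Quantum.

(* Main.v *)
Require Import Defs.
From HB Require Import structures.
From mathcomp Require Import all_boot all_order all_algebra.
From mathcomp Require Import complex mxtens spectral.
From mathcomp Require Import ring lra.
Import Order.TTheory GRing.Theory Num.Theory.
Local Open Scope ring_scope.
Set Implicit Arguments. Unset Strict Implicit.
Section S. Variable R : rcfType.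
Local Notation C := (R[i]).

Lemma qformE n (A : 'M[C]_n) (v : 'cV[C]_n) :
  (adjmx v *m A *m v) 0 0 = \sum_i \sum_j (v i 0)^* * A i j * v j 0.
Proof.
rewrite mxE exchange_big /=; apply: eq_bigr => j _.
rewrite mxE mulr_suml; apply: eq_bigr => i _.
by rewrite mxE.
Qed.

Lemma sum_tens m n (F : 'I_(m * n) -> C) :
  \sum_p F p = \sum_i \sum_j F (mxtens_index (i, j)).
Proof.
rewrite pair_big /=.
rewrite (reindex (@mxtens_index m n)) /=; last first.
  by exists (@mxtens_unindex m n) => x _; [rewrite mxtens_indexK | rewrite mxtens_unindexK].
by apply: eq_bigr => -[i j].
Qed.

Lemma trace_tens m n (A : 'M[C]_m) (B : 'M[C]_n) : \tr (A *t B) = \tr A * \tr B.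
Proof.
rewrite /mxtrace sum_tens mulr_suml; apply: eq_bigr => i _.
rewrite mulr_sumr; apply: eq_bigr => j _; by rewrite tensmxE.
Qed.
Lemma hermE n (X : 'M[C]_n) : Defs.hermitian X -> forall i j, (X j i)^* = X i j.
Proof. by move=> H i j; rewrite -{2}H mxE. Qed.

Definition permc N (g : 'I_N -> 'I_N) (X : 'M[C]_N) : 'M[C]_N :=
  \matrix_(i, j) X (g i) (g j).

Lemma psd_perm N (g : 'I_N -> 'I_N) (X : 'M[C]_N) :
  injective g -> psd X -> psd (permc g X).
Proof.
move=> ig [hX pX]; split.
  by apply/matrixP => i j; rewrite !mxE hermE.
move=> v; rewrite qformE.
have := pX (\col_k v (invF ig k) 0); rewrite qformE.
rewrite (reindex_inj ig); under eq_bigr => i _ do rewrite (reindex_inj ig).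
congr (0 <= _); apply: eq_bigr => i _; apply: eq_bigr => j _; by rewrite !mxE !invF_f.
Qed.
Definition liftg k n (g : 'I_n -> 'I_n) (p : 'I_(k * n)) : 'I_(k * n) :=
  mxtens_index ((mxtens_unindex p).1, g (mxtens_unindex p).2).

Arguments liftg k {n} g p.
Lemma liftg_inj k n (g : 'I_n -> 'I_n) : injective g -> injective (liftg k g).
Proof.
move=> ig p q; case: (mxtens_indexP p) => i j; case: (mxtens_indexP q) => i' j'.
rewrite /liftg !mxtens_indexK /= => /(congr1 (@mxtens_unindex k n)).
by rewrite !mxtens_indexK => -[-> /ig ->].
Qed.

Lemma ampliate_perm k n (g : 'I_n -> 'I_n) (X : 'M[C]_(k * n)) :
  ampliate (permc g) X = permc (liftg k g) X.
Proof. by apply/matrixP => p q; rewrite !mxE. Qed.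

Lemma channel_perm n (g : 'I_n -> 'I_n) : injective g -> channel (permc g).
Proof.
move=> ig; split.
- by move=> a X Y; apply/matrixP => i j; rewrite !mxE.
- by move=> k X pX; rewrite ampliate_perm; apply: psd_perm => //; apply: liftg_inj.
- move=> X; rewrite /mxtrace [RHS](reindex_inj ig); apply: eq_bigr => i _; by rewrite mxE.
Qed.
Lemma exch4 a b c d (F : 'I_a -> 'I_b -> 'I_c -> 'I_d -> C) :
  \sum_p \sum_q \sum_i \sum_j F p q i j = \sum_i \sum_j \sum_p \sum_q F p q i j.
Proof.
under eq_bigr => p _ do rewrite exchange_big.
under eq_bigr => p _ do under eq_bigr => i _ do rewrite exchange_big.
rewrite exchange_big.
by under eq_bigr => i _ do rewrite exchange_big.
Qed.

Lemma sum_delta2 N (F : 'I_N -> 'I_N -> C) p0 q0 :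
  \sum_p \sum_q (if p == p0 then (if q == q0 then F p q else 0) else 0) = F p0 q0.
Proof.
rewrite (bigD1 p0) //=.
rewrite [X in _ + X]big1 ?addr0; last first.
  by move=> p /negbTE pn; rewrite pn big1.
rewrite eqxx (bigD1 q0) //= eqxx big1 ?addr0 //.
by move=> q /negbTE qn; rewrite qn.
Qed.

Definition subm m N (g : 'I_m -> 'I_N) (X : 'M[C]_N) : 'M[C]_m :=
  \matrix_(i, j) X (g i) (g j).

Lemma psd_sub m N (g : 'I_m -> 'I_N) (X : 'M[C]_N) : psd X -> psd (subm g X).
Proof.
move=> [hX pX]; split.
  by apply/matrixP => i j; rewrite !mxE hermE.
move=> v; rewrite qformE.
have := pX (\col_p \sum_i (if g i == p then v i 0 else 0)); rewrite qformE.
congr (0 <= _).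
have e : forall p q, ((\col_p \sum_i (if g i == p then v i 0 else 0)) p 0)^* * X p q *
   (\col_p \sum_i (if g i == p then v i 0 else 0)) q 0 =
   \sum_i \sum_j (if p == g i then (if q == g j then (v i 0)^* * X p q * v j 0 else 0) else 0).
  move=> p q; rewrite !mxE rmorph_sum mulr_suml mulr_suml; apply: eq_bigr => i _.
  rewrite mulr_sumr; apply: eq_bigr => j _.
  by rewrite [g i == p]eq_sym [g j == q]eq_sym; case: (p == g i); case: (q == g j);
     rewrite ?rmorph0 ?mul0r ?mulr0.
under eq_bigr => p _ do under eq_bigr => q _ do rewrite e.
rewrite exch4; apply: eq_bigr => i _; apply: eq_bigr => j _.
by rewrite (sum_delta2 (fun p q => (v i 0)^* * X p q * v j 0)) mxE.
Qed.
Lemma psd_sum n k (Y : 'I_k -> 'M[C]_n) : (forall a, psd (Y a)) -> psd (\sum_a Y a).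
Proof.
move=> pY; split.
  apply/matrixP => i j; rewrite !mxE !summxE rmorph_sum; apply: eq_bigr => a _.
  by case: (pY a) => h _; apply: hermE.
move=> v; rewrite qformE.
have -> : \sum_i \sum_j (v i 0)^* * (\sum_a Y a) i j * v j 0 =
  \sum_a (adjmx v *m Y a *m v) 0 0.
  under [RHS]eq_bigr => a _ do rewrite qformE.
  rewrite [RHS]exchange_big; apply: eq_bigr => i _.
  rewrite [RHS]exchange_big; apply: eq_bigr => j _.
  by rewrite summxE mulr_sumr mulr_suml.
by apply: sumr_ge0 => a _; case: (pY a) => _; apply.
Qed.

Lemma density_ptrace2 m n (X : 'M[C]_(m * n)) : density X -> density (ptrace2 X).
Proof.
move=> [pX tX]; split.
  have -> : ptrace2 X = \sum_a subm (fun i => mxtens_index (i, a)) X.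
    by apply/matrixP => i j; rewrite !mxE summxE; apply: eq_bigr => a _; rewrite mxE.
  by apply: psd_sum => a; apply: psd_sub.
rewrite -tX /mxtrace sum_tens; apply: eq_bigr => i _; by rewrite mxE.
Qed.

Lemma density_ptrace1 m n (X : 'M[C]_(m * n)) : density X -> density (ptrace1 X).
Proof.
move=> [pX tX]; split.
  have -> : ptrace1 X = \sum_i subm (fun a => mxtens_index (i, a)) X.
    by apply/matrixP => a b; rewrite !mxE summxE; apply: eq_bigr => i _; rewrite mxE.
  by apply: psd_sum => i; apply: psd_sub.
rewrite -tX /mxtrace sum_tens exchange_big; apply: eq_bigr => i _; by rewrite mxE.
Qed.
Lemma adj_tstar m n (M : 'M[C]_(m, n)) : adjmx M = map_mx Num.conj (trmx M).
Proof. by apply/matrixP => i j; rewrite !mxE. Qed.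

Lemma spec_decomp n (A : 'M[C]_n) : psd A -> exists (P : 'M[C]_n) (d : 'rV[C]_n),
  (forall t, 0 <= d 0 t) /\ forall i j, A i j = \sum_t (P t i)^* * d 0 t * P t j.
Proof.
move=> [hA pA].
have hA' : map_mx Num.conj (trmx A) = A by rewrite -adj_tstar.
have nA : A \is normalmx by apply/normalmxP; rewrite hA'.
have PU := spectral_unitarymx A.
set P := spectralmx A; set d := spectral_diag A.
have EA : A = map_mx Num.conj (trmx P) *m diag_mx d *m P.
  by rewrite -invmx_unitary //; apply/orthomx_spectralP.
exists P, d; split; last first.
  move=> i j; rewrite {1}EA mxE; apply: eq_bigr => t _.
  by rewrite mul_mx_diag !mxE.
move=> t.
have Ed : diag_mx d = P *m A *m map_mx Num.conj (trmx P).
  by rewrite EA !mulmxA (unitarymxP PU) mul1mx -mulmxA (unitarymxP PU) mulmx1.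
have -> : d 0 t = diag_mx d t t by rewrite mxE eqxx mulr1n.
rewrite Ed.
have := pA (\col_i (P t i)^*).
congr (0 <= _); rewrite !mxE; apply: eq_bigr => j _; rewrite !mxE; congr (_ * _).
by apply: eq_bigr => i _; rewrite !mxE conjCK.
Qed.
Lemma exch5 a b c d e (F : 'I_a -> 'I_b -> 'I_c -> 'I_d -> 'I_e -> C) :
  \sum_i \sum_k \sum_j \sum_l \sum_t F i k j l t =
  \sum_t \sum_i \sum_k \sum_j \sum_l F i k j l t.
Proof.
under eq_bigr => i _ do under eq_bigr => k _ do under eq_bigr => j _ do rewrite exchange_big.
under eq_bigr => i _ do under eq_bigr => k _ do rewrite exchange_big.
under eq_bigr => i _ do rewrite exchange_big.
by rewrite exchange_big.
Qed.

Lemma exch4' a b c d (F : 'I_a -> 'I_b -> 'I_c -> 'I_d -> C) :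
  \sum_k \sum_l \sum_i \sum_j F k l i j = \sum_i \sum_k \sum_j \sum_l F k l i j.
Proof.
under eq_bigr => k _ do rewrite exchange_big.
rewrite exchange_big.
by under eq_bigr => i _ do under eq_bigr => k _ do rewrite exchange_big.
Qed.

Lemma psd_tens m n (A : 'M[C]_m) (B : 'M[C]_n) : psd A -> psd B -> psd (A *t B).
Proof.
move=> pA [hB pB]; have [hA _] := pA.
split.
  apply/matrixP => p q; case: (mxtens_indexP p) => i k; case: (mxtens_indexP q) => j l.
  by rewrite mxE !tensmxE -(hermE hA i j) -(hermE hB k l) rmorphM.
have [P [d [d0 EA]]] := spec_decomp pA.
move=> v; rewrite qformE.
have -> : \sum_i \sum_j (v i 0)^* * (A *t B) i j * v j 0 =
  \sum_t d 0 t * (adjmx (\col_k \sum_j P t j * v (mxtens_index (j, k)) 0) *m B *m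
                   (\col_k \sum_j P t j * v (mxtens_index (j, k)) 0)) 0 0.
  rewrite sum_tens.
  under eq_bigr => i _ do under eq_bigr => k _ do rewrite sum_tens.
  under eq_bigr => i _ do under eq_bigr => k _ do under eq_bigr => j _ do
    under eq_bigr => l _ do rewrite tensmxE EA mulr_suml mulr_sumr mulr_suml.
  rewrite exch5; apply: eq_bigr => t _.
  rewrite qformE mulr_sumr -exch4'; apply: eq_bigr => k _.
  rewrite mulr_sumr; apply: eq_bigr => l _.
  rewrite !mxE rmorph_sum !mulr_suml mulr_sumr; apply: eq_bigr => i _.
  rewrite mulr_sumr mulr_sumr; apply: eq_bigr => j _.
  rewrite rmorphM; ring.
by apply: sumr_ge0 => t _; apply: mulr_ge0 => //; apply: pB.
Qed.
Definition sw1 m n (p : 'I_(m * (m * n))) : 'I_(m * (m * n)) :=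
  mxtens_index ((mxtens_unindex (mxtens_unindex p).2).1,
                mxtens_index ((mxtens_unindex p).1, (mxtens_unindex (mxtens_unindex p).2).2)).
Definition sw2 m n (p : 'I_(n * (m * n))) : 'I_(n * (m * n)) :=
  mxtens_index ((mxtens_unindex (mxtens_unindex p).2).2,
                mxtens_index ((mxtens_unindex (mxtens_unindex p).2).1, (mxtens_unindex p).1)).

Lemma sw1E m n a b c : @sw1 m n (mxtens_index (a, mxtens_index (b, c))) =
  mxtens_index (b, mxtens_index (a, c)).
Proof. by rewrite /sw1 !mxtens_indexK. Qed.
Lemma sw2E m n a b c : @sw2 m n (mxtens_index (a, mxtens_index (b, c))) =
  mxtens_index (c, mxtens_index (b, a)).
Proof. by rewrite /sw2 !mxtens_indexK. Qed.

Lemma sw1_inj m n : injective (@sw1 m n).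
Proof.
apply: (@inv_inj _ (@sw1 m n)) => p.
by case: (mxtens_indexP p) => a q; case: (mxtens_indexP q) => b c; rewrite !sw1E.
Qed.
Lemma sw2_inj m n : injective (@sw2 m n).
Proof.
apply: (@inv_inj _ (@sw2 m n)) => p.
by case: (mxtens_indexP p) => a q; case: (mxtens_indexP q) => b c; rewrite !sw2E.
Qed.

Section Steps.
Variables (m n : nat) (s1 : 'M[C]_m) (s2 : 'M[C]_n).

Lemma fix1 : permc (@sw1 m n) (s1 *t (s1 *t s2)) = s1 *t (s1 *t s2).
Proof.
apply/matrixP => p q.
case: (mxtens_indexP p) => a p'; case: (mxtens_indexP p') => b c.
case: (mxtens_indexP q) => a' q'; case: (mxtens_indexP q') => b' c'.
rewrite mxE !sw1E !tensmxE; ring.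
Qed.

Lemma fix2 : permc (@sw2 m n) (s2 *t (s1 *t s2)) = s2 *t (s1 *t s2).
Proof.
apply/matrixP => p q.
case: (mxtens_indexP p) => a p'; case: (mxtens_indexP p') => b c.
case: (mxtens_indexP q) => a' q'; case: (mxtens_indexP q') => b' c'.
rewrite mxE !sw2E !tensmxE; ring.
Qed.

Lemma step1_2 (r : 'M[C]_(m * n)) : \tr s1 = 1 ->
  ptrace2 (permc (@sw1 m n) (s1 *t r)) = ptrace2 r.
Proof.
move=> t1; apply/matrixP => a a'; rewrite !mxE sum_tens.
rewrite -[RHS]mul1r -t1 /mxtrace mulr_suml; apply: eq_bigr => b _.
rewrite mulr_sumr; apply: eq_bigr => c _.
by rewrite mxE !sw1E tensmxE.
Qed.

Lemma step1_1 (r : 'M[C]_(m * n)) :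
  ptrace1 (permc (@sw1 m n) (s1 *t r)) = s1 *t ptrace1 r.
Proof.
apply/matrixP => p q.
case: (mxtens_indexP p) => b c; case: (mxtens_indexP q) => b' c'.
rewrite tensmxE !mxE mulr_sumr; apply: eq_bigr => a _.
by rewrite mxE !sw1E tensmxE.
Qed.

Lemma step2_2 (r : 'M[C]_n) : \tr s1 = 1 -> \tr s2 = 1 ->
  ptrace2 (permc (@sw2 m n) (s2 *t (s1 *t r))) = r.
Proof.
move=> t1 t2; apply/matrixP => a a'; rewrite !mxE sum_tens.
transitivity (\sum_b \sum_c (s1 b b * (s2 c c * r a a'))).
  apply: eq_bigr => b _; apply: eq_bigr => c _; rewrite mxE !sw2E !tensmxE; ring.
under eq_bigr => b _ do rewrite -mulr_sumr -mulr_suml.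
by rewrite -mulr_suml; move: t1 t2; rewrite /mxtrace => -> ->; rewrite !mul1r.
Qed.

Lemma step2_1 (r : 'M[C]_n) : \tr r = 1 ->
  ptrace1 (permc (@sw2 m n) (s2 *t (s1 *t r))) = s1 *t s2.
Proof.
move=> tr; apply/matrixP => p q.
case: (mxtens_indexP p) => b c; case: (mxtens_indexP q) => b' c'.
rewrite tensmxE !mxE.
rewrite -[RHS]mulr1 -tr /mxtrace mulr_sumr; apply: eq_bigr => a _.
rewrite mxE !sw2E !tensmxE; ring.
Qed.
End Steps.
End S.

Theorem lemma37 (R : rcfType) (S : states_set R)
  (f : forall n, 'M[R[i]]_n -> 'M[R[i]]_n -> R)
  (HS : forall n (s : 'M[R[i]]_n), S n s -> density s)
  (Htens : closed_tensor S) (Hperm : closed_perm S)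
  (Hmon : locally_monotonic S f) :
  let f' := fun n (rho sigma : 'M[R[i]]_n) => f n rho sigma - f n sigma sigma in
  forall m n (s1 : 'M[R[i]]_m) (s2 : 'M[R[i]]_n), S m s1 -> S n s2 ->
  forall r12 : 'M[R[i]]_(m * n), density r12 ->
  f' m (ptrace2 r12) s1 + f' n (ptrace1 r12) s2 <= f' (m * n)%N r12 (s1 *t s2).
Proof.
move=> f' m n s1 s2 S1 S2 r12 dr.
have d1 := HS _ _ S1; have d2 := HS _ _ S2.
have S12 := Htens _ _ _ _ S1 S2.
have dr2 := density_ptrace1 dr.
have dX : density (s1 *t ptrace1 r12).
  split; first by apply: psd_tens; [case: d1 | case: dr2].
  by rewrite trace_tens d1.2 dr2.2 mulr1.
have H1 := Hmon m (m * n)%N s1 (s1 *t s2) S1 S12 _ (@channel_perm R _ _ (@sw1_inj m n))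
  (fix1 s1 s2) s1 r12 d1 dr.
rewrite step1_2 ?d1.2 // step1_1 in H1.
have H2 := Hmon n (m * n)%N s2 (s1 *t s2) S2 S12 _ (@channel_perm R _ _ (@sw2_inj m n))
  (fix2 s1 s2) s2 _ d2 dX.
rewrite step2_2 ?d1.2 ?d2.2 // step2_1 ?dr2.2 // in H2.
rewrite /f'; lra.
Qed.
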